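(* Let $k_0\in\mathbb{R}$, let $w\in C^2(\mathbb{R})$ be real-valued with $\lim_{x\to\pm\infty}w(x)=\mp k_0$ and $\lim_{x\to\pm\infty}w'(x)=0$, and $U=-w^2-iw'+k_0^2$. Let $k_\star\in\mathbb{R}\setminus\{0,\pm k_0\}$ and $\rho_\star>0$. Suppose $\psi_{\rm las}$ and $\psi_{\rm CPA}$ are solutions of $-\psi''+U\psi=k_\star^2\psi$ such that, together with their first derivatives, $$\psi_{\rm las}(x)\sim a_\pm e^{\pm ik_\star x},\qquad \psi_{\rm CPA}(x)\sim c_\pm e^{\mp ik_\star x}\qquad (x\to\pm\infty),$$ with $|a_+|=|a_-|=|c_+|=|c_-|=\rho_\star$. Then for all $x\in\mathbb{R}$, $$|\psi_{\rm CPA}(x)|^2+|\psi_{\rm las}(x)|^2+\frac{k_0}{k_\star}\big(|\psi_{\rm las}(x)|^2-|\psi_{\rm CPA}(x)|^2\big)=2\rho_\star^2.$$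
   Context: ''$f(x)\sim a e^{i\kappa x}$ together with the first derivative'' means $f(x)-ae^{i\kappa x}\to0$ and $f'(x)-i\kappa a e^{i\kappa x}\to0$. Such $\psi_{\rm las},\psi_{\rm CPA}$ are the laser (outgoing) and coherent-perfect-absorber (incoming) solutions at a self-dual spectral singularity $k_\star$. *)

(* Defs.v *)
From Stdlib Require Import Reals Lra.
Open Scope R_scope.

Definition Cplx := (R * R)%type.
Definition Cre (z : Cplx) : R := fst z.
Definition Cim (z : Cplx) : R := snd z.
Definition Cadd (z w : Cplx) : Cplx := (Cre z + Cre w, Cim z + Cim w).
Definition Csub (z w : Cplx) : Cplx := (Cre z - Cre w, Cim z - Cim w).
Definition Cmul (z w : Cplx) : Cplx :=
  (Cre z * Cre w - Cim z * Cim w, Cre z * Cim w + Cim z * Cre w).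
Definition RtoC (r : R) : Cplx := (r, 0).
Definition Ci : Cplx := (0, 1).
Definition Cnorm2 (z : Cplx) : R := Cre z ^ 2 + Cim z ^ 2.
Definition Cnorm (z : Cplx) : R := sqrt (Cnorm2 z).
Definition Cexpi (t : R) : Cplx := (cos t, sin t).

Definition Cderiv_lim (f : R -> Cplx) (x : R) (l : Cplx) : Prop :=
  derivable_pt_lim (fun t => Cre (f t)) x (Cre l) /\
  derivable_pt_lim (fun t => Cim (f t)) x (Cim l).

Definition Rlim_pinf (f : R -> R) (l : R) : Prop :=
  forall eps, 0 < eps -> exists M, forall x, M < x -> Rabs (f x - l) < eps.
Definition Rlim_minf (f : R -> R) (l : R) : Prop :=
  forall eps, 0 < eps -> exists M, forall x, x < M -> Rabs (f x - l) < eps.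
Definition Czero_pinf (g : R -> Cplx) : Prop :=
  forall eps, 0 < eps -> exists M, forall x, M < x -> Cnorm (g x) < eps.
Definition Czero_minf (g : R -> Cplx) : Prop :=
  forall eps, 0 < eps -> exists M, forall x, x < M -> Cnorm (g x) < eps.

Definition asym_pinf (f f' : R -> Cplx) (a : Cplx) (kappa : R) : Prop :=
  Czero_pinf (fun x => Csub (f x) (Cmul a (Cexpi (kappa * x)))) /\
  Czero_pinf (fun x => Csub (f' x) (Cmul (Cmul Ci (RtoC kappa)) (Cmul a (Cexpi (kappa * x))))).
Definition asym_minf (f f' : R -> Cplx) (a : Cplx) (kappa : R) : Prop :=
  Czero_minf (fun x => Csub (f x) (Cmul a (Cexpi (kappa * x)))) /\
  Czero_minf (fun x => Csub (f' x) (Cmul (Cmul Ci (RtoC kappa)) (Cmul a (Cexpi (kappa * x))))).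

(* the potential U = -w^2 - i w' + k0^2, with w1 = w' *)
Definition Upot (k0 : R) (w w1 : R -> R) (x : R) : Cplx :=
  (k0 ^ 2 - (w x) ^ 2, - w1 x).

Definition is_solution (k0 k : R) (w w1 : R -> R) (psi psi1 psi2 : R -> Cplx) : Prop :=
  (forall x, Cderiv_lim psi x (psi1 x)) /\
  (forall x, Cderiv_lim psi1 x (psi2 x)) /\
  (forall x, Cadd (Csub (RtoC 0) (psi2 x)) (Cmul (Upot k0 w w1 x) (psi x))
             = Cmul (RtoC (k ^ 2)) (psi x)).

(* Main.v *)
Require Import Defs.
From Stdlib Require Import Reals Lra Psatz.
Open Scope R_scope.

Lemma const_of_D0 (f : R -> R) : (forall x, derivable_pt_lim f x 0) -> forall x y, f x = f y.
Proof.
  intros H. set (pr := fun x => exist (fun l => derivable_pt_abs f x l) 0 (H x) : derivable_pt f x).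
  apply (null_derivative_1 f pr). intros x; reflexivity.
Qed.

Lemma XDplus f g x a b : derivable_pt_lim f x a -> derivable_pt_lim g x b ->
  derivable_pt_lim (fun t => f t + g t) x (a + b).
Proof. intros; now apply derivable_pt_lim_plus. Qed.
Lemma XDminus f g x a b : derivable_pt_lim f x a -> derivable_pt_lim g x b ->
  derivable_pt_lim (fun t => f t - g t) x (a - b).
Proof. intros; now apply derivable_pt_lim_minus. Qed.
Lemma XDmult f g x a b : derivable_pt_lim f x a -> derivable_pt_lim g x b ->
  derivable_pt_lim (fun t => f t * g t) x (a * g x + f x * b).
Proof. intros; now apply derivable_pt_lim_mult. Qed.
Lemma XDopp f x a : derivable_pt_lim f x a -> derivable_pt_lim (fun t => - f t) x (- a).
Proof. intros; now apply derivable_pt_lim_opp. Qed.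
Lemma XDconst c x : derivable_pt_lim (fun _ => c) x 0.
Proof. apply derivable_pt_lim_const. Qed.
Lemma XDcongr f x l l' : derivable_pt_lim f x l -> l = l' -> derivable_pt_lim f x l'.
Proof. intros H ->; exact H. Qed.

Ltac dt := first [ eassumption | apply XDconst | apply XDplus | apply XDminus | apply XDmult | apply XDopp ].

Definition Zf (f : R -> R) := forall eps, 0 < eps -> exists M, forall x, M < x -> Rabs (f x) < eps.
Definition Bd (f : R -> R) := exists M B, forall x, M < x -> Rabs (f x) <= B.
Definition approx (f g : R -> R) := Zf (fun t => f t - g t) /\ Bd g.

Lemma Zf_ext f g : (forall t, f t = g t) -> Zf f -> Zf g.
Proof. intros E H eps he; destruct (H eps he) as [M HM]; exists M; intros; rewrite <- E; auto. Qed.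

Lemma Zf_plus f g : Zf f -> Zf g -> Zf (fun t => f t + g t).
Proof.
  intros H1 H2 eps he. destruct (H1 (eps/2)) as [M1 HM1]; [lra|].
  destruct (H2 (eps/2)) as [M2 HM2]; [lra|]. exists (Rmax M1 M2). intros x Hx.
  assert (M1 < x) by (eapply Rle_lt_trans; [apply Rmax_l|exact Hx]).
  assert (M2 < x) by (eapply Rle_lt_trans; [apply Rmax_r|exact Hx]).
  specialize (HM1 x H); specialize (HM2 x H0).
  eapply Rle_lt_trans; [apply Rabs_triang|]. lra.
Qed.

Lemma Zf_mult f g : Zf f -> Bd g -> Zf (fun t => f t * g t).
Proof.
  intros H1 [M0 [B H2]] eps he.
  assert (hB : 0 < Rabs B + 1) by (pose proof (Rabs_pos B); lra).
  destruct (H1 (eps / (Rabs B + 1))) as [M1 HM1]. { apply Rdiv_lt_0_compat; lra. }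
  exists (Rmax M0 M1). intros x Hx.
  assert (M0 < x) by (eapply Rle_lt_trans; [apply Rmax_l|exact Hx]).
  assert (M1 < x) by (eapply Rle_lt_trans; [apply Rmax_r|exact Hx]).
  specialize (HM1 x H0); specialize (H2 x H).
  rewrite Rabs_mult.
  assert (Rabs (g x) <= Rabs B + 1) by (pose proof (Rle_abs B); lra).
  assert (eps / (Rabs B + 1) * (Rabs B + 1) = eps) by (field; lra).
  pose proof (Rabs_pos (f x)). pose proof (Rabs_pos (g x)).
  nra.
Qed.

Lemma Zf_bd f : Zf f -> Bd f.
Proof. intros H. destruct (H 1) as [M HM]; [lra|]. exists M, 1. intros; left; auto. Qed.

Lemma Bd_plus f g : Bd f -> Bd g -> Bd (fun t => f t + g t).
Proof.
  intros [M1 [B1 H1]] [M2 [B2 H2]]. exists (Rmax M1 M2), (B1 + B2). intros x Hx.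
  assert (M1 < x) by (eapply Rle_lt_trans; [apply Rmax_l|exact Hx]).
  assert (M2 < x) by (eapply Rle_lt_trans; [apply Rmax_r|exact Hx]).
  specialize (H1 x H); specialize (H2 x H0).
  eapply Rle_trans; [apply Rabs_triang|]. lra.
Qed.

Lemma Bd_mult f g : Bd f -> Bd g -> Bd (fun t => f t * g t).
Proof.
  intros [M1 [B1 H1]] [M2 [B2 H2]]. exists (Rmax M1 M2), (B1 * B2). intros x Hx.
  assert (M1 < x) by (eapply Rle_lt_trans; [apply Rmax_l|exact Hx]).
  assert (M2 < x) by (eapply Rle_lt_trans; [apply Rmax_r|exact Hx]).
  specialize (H1 x H); specialize (H2 x H0). rewrite Rabs_mult.
  apply Rmult_le_compat; auto using Rabs_pos.
Qed.

Lemma Bd_opp f : Bd f -> Bd (fun t => - f t).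
Proof. intros [M [B H]]; exists M, B; intros; rewrite Rabs_Ropp; auto. Qed.

Lemma approx_plus f g f' g' : approx f f' -> approx g g' ->
  approx (fun t => f t + g t) (fun t => f' t + g' t).
Proof.
  intros [H1 B1] [H2 B2]; split; [|now apply Bd_plus].
  eapply Zf_ext; [|apply (Zf_plus _ _ H1 H2)]. intros; simpl; ring.
Qed.
Lemma approx_opp f f' : approx f f' -> approx (fun t => - f t) (fun t => - f' t).
Proof.
  intros [H1 B1]; split; [|now apply Bd_opp].
  eapply Zf_ext; [|apply (Zf_mult _ (fun _ => -1) H1)]. intros; simpl; ring.
  exists 0, 1; intros; unfold Rabs; destruct Rcase_abs; lra.
Qed.
Lemma approx_minus f g f' g' : approx f f' -> approx g g' ->
  approx (fun t => f t - g t) (fun t => f' t - g' t).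
Proof.
  intros H1 H2. apply approx_plus; [exact H1|]. now apply approx_opp.
Qed.
Lemma approx_mult f g f' g' : approx f f' -> approx g g' ->
  approx (fun t => f t * g t) (fun t => f' t * g' t).
Proof.
  intros [H1 B1] [H2 B2]; split; [|now apply Bd_mult].
  assert (Hd := Zf_plus _ _ (Zf_plus _ _ (Zf_mult _ _ H1 (Zf_bd _ H2)) (Zf_mult _ _ H1 B2))
     (Zf_mult _ _ H2 B1)).
  eapply Zf_ext; [|exact Hd]. intros; simpl; ring.
Qed.
Lemma approx_const c : approx (fun _ => c) (fun _ => c).
Proof.
  split. intros eps he; exists 0; intros; rewrite Rminus_diag, Rabs_R0; auto.
  exists 0, (Rabs c); intros; lra.
Qed.

Ltac at_ := first [ eassumption | apply approx_const | apply approx_plus | apply approx_minus | apply approx_mult | apply approx_opp ].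

Lemma Zf_const_lim f K x : (forall t, f t = f x) -> Zf (fun t => f t - K) -> f x = K.
Proof.
  intros E H. destruct (Req_dec (f x) K) as [|n]; auto.
  assert (0 < Rabs (f x - K)) by (apply Rabs_pos_lt; lra).
  destruct (H _ H0) as [M HM]. specialize (HM (M+1) ltac:(lra)). rewrite E in HM. lra.
Qed.

Lemma Rabs_re_le z : Rabs (Cre z) <= Cnorm z.
Proof.
  unfold Cnorm, Cnorm2. rewrite <- sqrt_Rsqr_abs. apply sqrt_le_1_alt.
  unfold Rsqr; nra.
Qed.
Lemma Rabs_im_le z : Rabs (Cim z) <= Cnorm z.
Proof.
  unfold Cnorm, Cnorm2. rewrite <- sqrt_Rsqr_abs. apply sqrt_le_1_alt.
  unfold Rsqr; nra.
Qed.

Lemma Czero_re g : Czero_pinf g -> Zf (fun t => Cre (g t)).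
Proof. intros H eps he; destruct (H eps he) as [M HM]; exists M; intros;
  eapply Rle_lt_trans; [apply Rabs_re_le|auto]. Qed.
Lemma Czero_im g : Czero_pinf g -> Zf (fun t => Cim (g t)).
Proof. intros H eps he; destruct (H eps he) as [M HM]; exists M; intros;
  eapply Rle_lt_trans; [apply Rabs_im_le|auto]. Qed.

Lemma Bd_trig a b k : Bd (fun t => a * cos (k * t) - b * sin (k * t)).
Proof.
  exists 0, (Rabs a + Rabs b). intros x _.
  eapply Rle_trans; [apply Rabs_triang|]. rewrite Rabs_Ropp, !Rabs_mult.
  pose proof (COS_bound (k*x)); pose proof (SIN_bound (k*x)).
  assert (Rabs (cos (k*x)) <= 1) by (apply Rabs_le; lra).
  assert (Rabs (sin (k*x)) <= 1) by (apply Rabs_le; lra).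
  pose proof (Rabs_pos a); pose proof (Rabs_pos b);
  pose proof (Rabs_pos (cos (k*x))); pose proof (Rabs_pos (sin (k*x))). nra.
Qed.
Lemma Bd_trig2 a b k : Bd (fun t => a * sin (k * t) + b * cos (k * t)).
Proof.
  exists 0, (Rabs a + Rabs b). intros x _.
  eapply Rle_trans; [apply Rabs_triang|]. rewrite !Rabs_mult.
  pose proof (COS_bound (k*x)); pose proof (SIN_bound (k*x)).
  assert (Rabs (cos (k*x)) <= 1) by (apply Rabs_le; lra).
  assert (Rabs (sin (k*x)) <= 1) by (apply Rabs_le; lra).
  pose proof (Rabs_pos a); pose proof (Rabs_pos b);
  pose proof (Rabs_pos (cos (k*x))); pose proof (Rabs_pos (sin (k*x))). nra.
Qed.

Lemma sol_derivs k0 k w w1 psi psi1 psi2 :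
  (forall x, derivable_pt_lim w x (w1 x)) ->
  is_solution k0 k w w1 psi psi1 psi2 -> forall x,
  derivable_pt_lim (fun t => Cre (psi t)) x ((Cre (psi1 x) - w x * Cim (psi x)) + w x * Cim (psi x)) /\
  derivable_pt_lim (fun t => Cim (psi t)) x ((Cim (psi1 x) + w x * Cre (psi x)) - w x * Cre (psi x)) /\
  derivable_pt_lim (fun t => Cre (psi1 t) - w t * Cim (psi t)) x
     (- w x * (Cim (psi1 x) + w x * Cre (psi x)) - (k^2 - k0^2) * Cre (psi x)) /\
  derivable_pt_lim (fun t => Cim (psi1 t) + w t * Cre (psi t)) x
     (w x * (Cre (psi1 x) - w x * Cim (psi x)) - (k^2 - k0^2) * Cim (psi x)).
Proof.
  intros Hw [H1 [H2 H3]] x.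
  destruct (H1 x) as [D1 D2]. destruct (H2 x) as [D3 D4]. specialize (H3 x).
  pose proof (f_equal fst H3) as E1. pose proof (f_equal snd H3) as E2.
  unfold Cadd, Csub, Cmul, Upot, RtoC, Cre, Cim in E1, E2, D1, D2, D3, D4; simpl in E1, E2, D1, D2, D3, D4.
  unfold Cre, Cim. specialize (Hw x).
  split; [eapply XDcongr; [exact D1| ring]|].
  split; [eapply XDcongr; [exact D2| ring]|].
  split.
  - refine (XDcongr _ _ _ _ (XDminus _ _ _ _ _ D3 (XDmult _ _ _ _ _ Hw D2)) _). nra.
  - refine (XDcongr _ _ _ _ (XDplus _ _ _ _ _ D4 (XDmult _ _ _ _ _ Hw D1)) _). nra.
Qed.

Lemma approx_ext2 f g g' : approx f g -> (forall t, g t = g' t) -> approx f g'.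
Proof.
  intros [H1 [M [B H2]]] E. split.
  - eapply Zf_ext; [|exact H1]. intros; simpl; rewrite E; ring.
  - exists M, B; intros; rewrite <- E; auto.
Qed.

Lemma trig_const K k t P : P = K * (sin (k*t) * sin (k*t) + cos (k*t) * cos (k*t)) -> P = K.
Proof. intros ->. pose proof (sin2_cos2 (k*t)) as H; unfold Rsqr in H; rewrite H; ring. Qed.

Lemma core k0 k rho a1 a2 c1 c2 (w pr pi ur ui sr si vr vi : R -> R) :
  k <> 0 -> k <> k0 -> 0 < rho -> a1*a1 + a2*a2 = rho*rho -> c1*c1+c2*c2 = rho*rho ->
  (forall x, derivable_pt_lim pr x (ur x)) -> (forall x, derivable_pt_lim pi x (ui x)) ->
  (forall x, derivable_pt_lim (fun t => ur t - w t * pi t) x (- w x * (ui x + w x * pr x) - (k*k-k0*k0) * pr x)) ->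
  (forall x, derivable_pt_lim (fun t => ui t + w t * pr t) x (w x * (ur x - w x * pi x) - (k*k-k0*k0) * pi x)) ->
  (forall x, derivable_pt_lim sr x (vr x)) -> (forall x, derivable_pt_lim si x (vi x)) ->
  (forall x, derivable_pt_lim (fun t => vr t - w t * si t) x (- w x * (vi x + w x * sr x) - (k*k-k0*k0) * sr x)) ->
  (forall x, derivable_pt_lim (fun t => vi t + w t * sr t) x (w x * (vr x - w x * si x) - (k*k-k0*k0) * si x)) ->
  approx w (fun _ => - k0) ->
  approx pr (fun t => a1 * cos (k*t) - a2 * sin (k*t)) ->
  approx pi (fun t => a1 * sin (k*t) + a2 * cos (k*t)) ->
  approx ur (fun t => (-k*a2) * cos (k*t) - (k*a1) * sin (k*t)) ->
  approx ui (fun t => (k*a1) * cos (k*t) - (k*a2) * sin (k*t)) ->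
  approx sr (fun t => c1 * cos (k*t) - (-c2) * sin (k*t)) ->
  approx si (fun t => (-c1) * sin (k*t) + c2 * cos (k*t)) ->
  approx vr (fun t => (k*c2) * cos (k*t) - (k*c1) * sin (k*t)) ->
  approx vi (fun t => (-k*c1) * cos (k*t) - (k*c2) * sin (k*t)) ->
  forall x, (sr x*sr x + si x*si x) + (pr x*pr x+pi x*pi x)
     + k0/k*((pr x*pr x+pi x*pi x) - (sr x*sr x + si x*si x)) = 2*rho*rho.
Proof.
  intros Hk Hk1 Hrho Ha Hc Dpr Dpi Dqr Dqi Dsr Dsi Dtr Dti Aw Apr Api Aur Aui Asr Asi Avr Avi x.
  assert (Aqr : approx (fun t => ur t - w t * pi t)
     (fun t => (-k*a2) * cos (k*t) - (k*a1) * sin (k*t) - (-k0) * (a1 * sin (k*t) + a2 * cos (k*t)))) by (repeat at_).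
  assert (Aqi : approx (fun t => ui t + w t * pr t)
     (fun t => (k*a1) * cos (k*t) - (k*a2) * sin (k*t) + (-k0) * (a1 * cos (k*t) - a2 * sin (k*t)))) by (repeat at_).
  assert (Atr : approx (fun t => vr t - w t * si t)
     (fun t => (k*c2) * cos (k*t) - (k*c1) * sin (k*t) - (-k0) * ((-c1) * sin (k*t) + c2 * cos (k*t)))) by (repeat at_).
  assert (Ati : approx (fun t => vi t + w t * sr t)
     (fun t => (-k*c1) * cos (k*t) - (k*c2) * sin (k*t) + (-k0) * (c1 * cos (k*t) - (-c2) * sin (k*t)))) by (repeat at_).
  clear Aur Aui Avr Avi.
  set (E := k*k - k0*k0) in *.
  pose (Q := fun t => (ur t - w t * pi t) * (ur t - w t * pi t) + (ui t + w t * pr t) * (ui t + w t * pr t)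
          + E * (pr t * pr t + pi t * pi t)).
  assert (HQ : Q x = 2 * k * (k - k0) * (a1*a1+a2*a2)).
  { apply Zf_const_lim.
    - intro t. apply (const_of_D0 Q). intro y. unfold Q.
      pose proof (Dpr y); pose proof (Dpi y); pose proof (Dqr y); pose proof (Dqi y);
      pose proof (Dsr y); pose proof (Dsi y); pose proof (Dtr y); pose proof (Dti y).
      refine (XDcongr _ _ _ _ _ _); [repeat dt | unfold E; ring].
    - assert (H : approx Q (fun _ => 2 * k * (k - k0) * (a1*a1+a2*a2))).
      { eapply approx_ext2. unfold Q. repeat at_.
        intro t; cbv beta. apply (trig_const _ k t). unfold E; ring. }
      exact (proj1 H). }
  pose (Sr := fun t => E * (pr t * sr t + pi t * si t) + ((ur t - w t * pi t) * (vr t - w t * si t) + (ui t + w t * pr t) * (vi t + w t * sr t))).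
  pose (Si := fun t => E * (pr t * si t - pi t * sr t) + ((ur t - w t * pi t) * (vi t + w t * sr t) - (ui t + w t * pr t) * (vr t - w t * si t))).
  assert (HSr : Sr x = 0).
  { apply Zf_const_lim.
    - intro t. apply (const_of_D0 Sr). intro y. unfold Sr.
      pose proof (Dpr y); pose proof (Dpi y); pose proof (Dqr y); pose proof (Dqi y);
      pose proof (Dsr y); pose proof (Dsi y); pose proof (Dtr y); pose proof (Dti y).
      refine (XDcongr _ _ _ _ _ _); [repeat dt | unfold E; ring].
    - assert (H : approx Sr (fun _ => 0)).
      { eapply approx_ext2. unfold Sr. repeat at_.
        intro t; cbv beta. unfold E; ring. }
      exact (proj1 H). }
  assert (HSi : Si x = 0).
  { apply Zf_const_lim.
    - intro t. apply (const_of_D0 Si). intro y. unfold Si.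
      pose proof (Dpr y); pose proof (Dpi y); pose proof (Dqr y); pose proof (Dqi y);
      pose proof (Dsr y); pose proof (Dsi y); pose proof (Dtr y); pose proof (Dti y).
      refine (XDcongr _ _ _ _ _ _); [repeat dt | unfold E; ring].
    - assert (H : approx Si (fun _ => 0)).
      { eapply approx_ext2. unfold Si. repeat at_.
        intro t; cbv beta. unfold E; ring. }
      exact (proj1 H). }
  pose (Wr := fun t => sr t * (ur t - w t * pi t) - si t * (ui t + w t * pr t) - ((vr t - w t * si t) * pr t - (vi t + w t * sr t) * pi t)).
  pose (Wi := fun t => sr t * (ui t + w t * pr t) + si t * (ur t - w t * pi t) - ((vr t - w t * si t) * pi t + (vi t + w t * sr t) * pr t)).
  assert (HWr : Wr x = - 2 * k * (c1 * a2 + c2 * a1)).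
  { apply Zf_const_lim.
    - intro t. apply (const_of_D0 Wr). intro y. unfold Wr.
      pose proof (Dpr y); pose proof (Dpi y); pose proof (Dqr y); pose proof (Dqi y);
      pose proof (Dsr y); pose proof (Dsi y); pose proof (Dtr y); pose proof (Dti y).
      refine (XDcongr _ _ _ _ _ _); [repeat dt | unfold E; ring].
    - assert (H : approx Wr (fun _ => - 2 * k * (c1 * a2 + c2 * a1))).
      { eapply approx_ext2. unfold Wr. repeat at_.
        intro t; cbv beta. apply (trig_const _ k t). ring. }
      exact (proj1 H). }
  assert (HWi : Wi x = 2 * k * (c1 * a1 - c2 * a2)).
  { apply Zf_const_lim.
    - intro t. apply (const_of_D0 Wi). intro y. unfold Wi.
      pose proof (Dpr y); pose proof (Dpi y); pose proof (Dqr y); pose proof (Dqi y);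
      pose proof (Dsr y); pose proof (Dsi y); pose proof (Dtr y); pose proof (Dti y).
      refine (XDcongr _ _ _ _ _ _); [repeat dt | unfold E; ring].
    - assert (H : approx Wi (fun _ => 2 * k * (c1 * a1 - c2 * a2))).
      { eapply approx_ext2. unfold Wi. repeat at_.
        intro t; cbv beta. apply (trig_const _ k t). ring. }
      exact (proj1 H). }
  unfold Q in HQ; unfold Sr in HSr; unfold Si in HSi; unfold Wr in HWr; unfold Wi in HWi.
  set (qr := ur x - w x * pi x) in *. set (qi := ui x + w x * pr x) in *.
  set (tr := vr x - w x * si x) in *. set (ti := vi x + w x * sr x) in *.
  set (P := pr x) in *. set (Pi := pi x) in *. set (S1 := sr x) in *. set (S2 := si x) in *.
  set (Qv := 2 * k * (k - k0) * (a1 * a1 + a2 * a2)) in *.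
  set (W1 := - 2 * k * (c1 * a2 + c2 * a1)) in *.
  set (W2 := 2 * k * (c1 * a1 - c2 * a2)) in *.
  assert (e1 : S1 * Qv = qr * W1 + qi * W2).
  { rewrite <- HQ, <- HWr, <- HWi. assert (H0 := HSr). assert (H1 := HSi).
    transitivity (qr * (S1 * qr - S2 * qi - (tr * P - ti * Pi)) + qi * (S1 * qi + S2 * qr - (tr * Pi + ti * P)) + P * (E * (P * S1 + Pi * S2) + (qr * tr + qi * ti)) - Pi * (E * (P * S2 - Pi * S1) + (qr * ti - qi * tr))).
    ring. rewrite H0, H1. ring. }
  assert (e2 : S2 * Qv = qr * W2 - qi * W1).
  { rewrite <- HQ, <- HWr, <- HWi. assert (H0 := HSr). assert (H1 := HSi).
    transitivity (qr * (S1 * qi + S2 * qr - (tr * Pi + ti * P)) - qi * (S1 * qr - S2 * qi - (tr * P - ti * Pi)) + P * (E * (P * S2 - Pi * S1) + (qr * ti - qi * tr)) + Pi * (E * (P * S1 + Pi * S2) + (qr * tr + qi * ti))).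
    ring. rewrite H0, H1. ring. }
  assert (e3 : (S1*S1 + S2*S2) * (Qv*Qv) = (qr*qr+qi*qi) * (W1*W1+W2*W2)).
  { transitivity ((S1*Qv)*(S1*Qv) + (S2*Qv)*(S2*Qv)). ring. rewrite e1, e2. ring. }
  assert (eW : W1*W1+W2*W2 = 4*k*k*(rho*rho)*(rho*rho)).
  { unfold W1, W2. rewrite <- Ha at 1. rewrite <- Hc. ring. }
  unfold Qv in e3. rewrite Ha, eW in e3.
  assert (hr : rho * rho <> 0) by nra.
  assert (hk : k - k0 <> 0) by lra.
  assert (e4 : (S1*S1+S2*S2) * ((k-k0)*(k-k0)) = qr*qr+qi*qi).
  { apply (Rmult_eq_reg_r (4*k*k*(rho*rho)*(rho*rho))).
    rewrite <- e3. ring.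
    assert (hkk : 0 < k*k) by (pose proof (Rsqr_pos_lt k Hk); unfold Rsqr in *; lra).
    assert (hrr : 0 < rho*rho) by nra.
    apply Rgt_not_eq. replace (4*k*k*(rho*rho)*(rho*rho)) with (4*(k*k)*((rho*rho)*(rho*rho))) by ring.
    apply Rmult_lt_0_compat; [apply Rmult_lt_0_compat; lra | apply Rmult_lt_0_compat; lra]. }
  unfold Qv in HQ. rewrite Ha in HQ.
  apply (Rmult_eq_reg_r (k*(k-k0))); [|intro h; apply Rmult_integral in h; lra].
  transitivity ((S1*S1+S2*S2)*((k-k0)*(k-k0)) + (P*P+Pi*Pi)*(k*k-k0*k0)).
  field. exact Hk. rewrite e4. unfold E in HQ. lra.
Qed.

Lemma norm_sq z rho : Cnorm z = rho -> Cre z * Cre z + Cim z * Cim z = rho * rho.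
Proof.
  unfold Cnorm, Cnorm2. intros <-. rewrite sqrt_sqrt. ring. nra.
Qed.

Theorem mainTheorem7
  (k0 : R) (w w1 w2 : R -> R)
  (Hw1 : forall x, derivable_pt_lim w x (w1 x))
  (Hw2 : forall x, derivable_pt_lim w1 x (w2 x))
  (Hw2c : continuity w2)
  (Hwp : Rlim_pinf w (- k0)) (Hwm : Rlim_minf w k0)
  (Hw1p : Rlim_pinf w1 0) (Hw1m : Rlim_minf w1 0)
  (kst rho : R)
  (Hk0 : kst <> 0) (Hk1 : kst <> k0) (Hk2 : kst <> - k0)
  (Hrho : 0 < rho)
  (las las1 las2 cpa cpa1 cpa2 : R -> Cplx)
  (ap am cp cm : Cplx)
  (Hlas : is_solution k0 kst w w1 las las1 las2)
  (Hcpa : is_solution k0 kst w w1 cpa cpa1 cpa2)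
  (Hlasp : asym_pinf las las1 ap kst) (Hlasm : asym_minf las las1 am (- kst))
  (Hcpap : asym_pinf cpa cpa1 cp (- kst)) (Hcpam : asym_minf cpa cpa1 cm kst)
  (Hap : Cnorm ap = rho) (Ham : Cnorm am = rho)
  (Hcp : Cnorm cp = rho) (Hcm : Cnorm cm = rho) :
  forall x : R,
    Cnorm2 (cpa x) + Cnorm2 (las x)
      + k0 / kst * (Cnorm2 (las x) - Cnorm2 (cpa x)) = 2 * rho ^ 2.
Proof.
  intros x.
  pose proof (sol_derivs _ _ _ _ _ _ _ Hw1 Hlas) as DL.
  pose proof (sol_derivs _ _ _ _ _ _ _ Hw1 Hcpa) as DC.
  destruct Hlasp as [L1 L2]. destruct Hcpap as [C1 C2].
  pose proof (core k0 kst rho (Cre ap) (Cim ap) (Cre cp) (Cim cp) w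
    (fun t => Cre (las t)) (fun t => Cim (las t)) (fun t => Cre (las1 t)) (fun t => Cim (las1 t))
    (fun t => Cre (cpa t)) (fun t => Cim (cpa t)) (fun t => Cre (cpa1 t)) (fun t => Cim (cpa1 t))
    Hk0 Hk1 Hrho (norm_sq _ _ Hap) (norm_sq _ _ Hcp)) as H.
  match type of H with ?A -> _ => assert (h : A) end.
  { intro y; destruct (DL y) as [d _]; refine (XDcongr _ _ _ _ d _); ring. }
  specialize (H h); clear h.
  match type of H with ?A -> _ => assert (h : A) end.
  { intro y; destruct (DL y) as [_ [d _]]; refine (XDcongr _ _ _ _ d _); ring. }
  specialize (H h); clear h.
  match type of H with ?A -> _ => assert (h : A) end.
  { intro y; destruct (DL y) as [_ [_ [d _]]]; refine (XDcongr _ _ _ _ d _); ring. }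
  specialize (H h); clear h.
  match type of H with ?A -> _ => assert (h : A) end.
  { intro y; destruct (DL y) as [_ [_ [_ d]]]; refine (XDcongr _ _ _ _ d _); ring. }
  specialize (H h); clear h.
  match type of H with ?A -> _ => assert (h : A) end.
  { intro y; destruct (DC y) as [d _]; refine (XDcongr _ _ _ _ d _); ring. }
  specialize (H h); clear h.
  match type of H with ?A -> _ => assert (h : A) end.
  { intro y; destruct (DC y) as [_ [d _]]; refine (XDcongr _ _ _ _ d _); ring. }
  specialize (H h); clear h.
  match type of H with ?A -> _ => assert (h : A) end.
  { intro y; destruct (DC y) as [_ [_ [d _]]]; refine (XDcongr _ _ _ _ d _); ring. }
  specialize (H h); clear h.
  match type of H with ?A -> _ => assert (h : A) end.
  { intro y; destruct (DC y) as [_ [_ [_ d]]]; refine (XDcongr _ _ _ _ d _); ring. }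
  specialize (H h); clear h.
  match type of H with ?A -> _ => assert (h : A) end.
  { split. intros eps he; destruct (Hwp eps he) as [M HM]; exists M; intros; auto.
    exists 0, (Rabs (-k0)); intros; lra. }
  specialize (H h); clear h.
  match type of H with ?A -> _ => assert (h : A) end.
  { split; [|apply Bd_trig]. eapply Zf_ext; [|apply (Czero_re _ L1)]. intro t.
    unfold Csub, Cmul, Cexpi, Cre, Cim; simpl. ring. }
  specialize (H h); clear h.
  match type of H with ?A -> _ => assert (h : A) end.
  { split; [|apply Bd_trig2]. eapply Zf_ext; [|apply (Czero_im _ L1)]. intro t.
    unfold Csub, Cmul, Cexpi, Cre, Cim; simpl. ring. }
  specialize (H h); clear h.
  match type of H with ?A -> _ => assert (h : A) end.
  { split; [|apply Bd_trig]. eapply Zf_ext; [|apply (Czero_re _ L2)]. intro t.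
    unfold Csub, Cmul, Cexpi, Cre, Cim, Ci, RtoC; simpl. ring. }
  specialize (H h); clear h.
  match type of H with ?A -> _ => assert (h : A) end.
  { split; [|apply Bd_trig]. eapply Zf_ext; [|apply (Czero_im _ L2)]. intro t.
    unfold Csub, Cmul, Cexpi, Cre, Cim, Ci, RtoC; simpl. ring. }
  specialize (H h); clear h.
  match type of H with ?A -> _ => assert (h : A) end.
  { split; [|apply Bd_trig]. eapply Zf_ext; [|apply (Czero_re _ C1)]. intro t.
    unfold Csub, Cmul, Cexpi, Cre, Cim; simpl.
    replace (- kst * t) with (- (kst * t)) by ring. rewrite cos_neg, sin_neg. ring. }
  specialize (H h); clear h.
  match type of H with ?A -> _ => assert (h : A) end.
  { split; [|apply Bd_trig2]. eapply Zf_ext; [|apply (Czero_im _ C1)]. intro t.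
    unfold Csub, Cmul, Cexpi, Cre, Cim; simpl.
    replace (- kst * t) with (- (kst * t)) by ring. rewrite cos_neg, sin_neg. ring. }
  specialize (H h); clear h.
  match type of H with ?A -> _ => assert (h : A) end.
  { split; [|apply Bd_trig]. eapply Zf_ext; [|apply (Czero_re _ C2)]. intro t.
    unfold Csub, Cmul, Cexpi, Cre, Cim, Ci, RtoC; simpl.
    replace (- kst * t) with (- (kst * t)) by ring. rewrite cos_neg, sin_neg. ring. }
  specialize (H h); clear h.
  match type of H with ?A -> _ => assert (h : A) end.
  { split; [|apply Bd_trig]. eapply Zf_ext; [|apply (Czero_im _ C2)]. intro t.
    unfold Csub, Cmul, Cexpi, Cre, Cim, Ci, RtoC; simpl.
    replace (- kst * t) with (- (kst * t)) by ring. rewrite cos_neg, sin_neg. ring. }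
  specialize (H h x); clear h.
  unfold Cnorm2. replace (2 * rho ^ 2) with (2 * rho * rho) by ring.
  rewrite <- H. ring.
Qed.
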